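(* For any two elements $w,w'\in W(M)$ one has $l_M(ww')=l_M(w)+l_M(w')$ if and only if $l(ww')=l(w)+l(w')$.
   Context: Let $F$ be a non-archimedean local field and $G$ the group of $F$-points of a connected reductive group over $F$. Fix a minimal parabolic subgroup $P_0=M_0U_0$, a maximal $F$-split torus $A_0\subseteq M_0$, and a standard parabolic subgroup $P=MU\supseteq P_0$ with $M\supseteq M_0$. Let $W=W^G$ be the Weyl group of $G$ with respect to $A_0$, $W^M$ that of $M$, and $l$ the usual length function on $W$ (with respect to the simple roots defined by $P_0$). $W(M)$ denotes the set of elements of $W$ that are of minimal length in their coset $wW^M$, for $w$ running over $\{w\in W: w^{-1}Mw=M\}$; it is a subgroup of $W$. Let $A_M$ be the maximal split central torus of $M$, $\Sigma(A_M)$ the set of nontrivial roots of $A_M$ in the Lie algebra of $G$, $\Sigma(P)$ those occurring in the Lie algebra of $U$, and $\Sigma_{red}(\cdot)$ the reduced roots in a given set; $\overline P$ is the parabolic opposite to $P$ with Levi $M$. For $w\in W(M)$ put $l_M(w)=|\Sigma_{red}(P)\cap\Sigma_{red}(w\overline{P}w^{-1})|$. *)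

(* Defs.v *)
From HB Require Import structures.
From mathcomp Require Import all_boot all_order all_algebra.
From Stdlib Require Import ClassicalEpsilon.
Set Implicit Arguments. Unset Strict Implicit. Unset Printing Implicit Defensive.
Import Order.TTheory GRing.Theory Num.Theory.
Local Open Scope ring_scope.

Definition pb (P : Prop) : bool :=
  if excluded_middle_informative P then true else false.

Section RootDatum.
Variables (R : realFieldType) (n : nat).
Implicit Types (a b x : 'cV[R]_n) (Phi D : seq 'cV[R]_n) (w v : 'M[R]_n).

(* W-invariant inner product on a_0^* = R^n (column vectors) *)
Definition dot (u v : 'cV[R]_n) : R := (u^T *m v) 0 0.

Definition cartan b a : R := 2 * dot b a / dot a a.

Definition reflmx a : 'M[R]_n := 1%:M - (2 / dot a a) *: (a *m a^T).

(* a (possibly non-reduced) crystallographic root system, listed without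
   repetition *)
Definition root_system Phi : Prop :=
  [/\ uniq Phi, (0 : 'cV[R]_n) \notin Phi,
      {in Phi &, forall a b, reflmx a *m b \in Phi} &
      {in Phi &, forall a b, exists z : int, cartan b a = z%:~R}].

Definition nonneg_comb D x : Prop :=
  exists c : 'I_(size D) -> nat, x = \sum_(i < size D) (c i)%:R *: D`_i.

Definition lin_indep D : Prop :=
  forall c : 'I_(size D) -> R, \sum_(i < size D) c i *: D`_i = 0 ->
    forall i, c i = 0.

(* D = Delta_0 is a set of simple roots (a base) of Phi, corresponding to P_0 *)
Definition base Phi D : Prop :=
  [/\ uniq D, {subset D <= Phi}, lin_indep D &
      forall a, a \in Phi -> nonneg_comb D a \/ nonneg_comb D (- a)].

Definition posb D a : bool := pb (nonneg_comb D a).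

Definition refl_word (s : seq 'cV[R]_n) : 'M[R]_n :=
  foldr (fun a M => reflmx a *m M) 1%:M s.

(* group generated by the reflections s_a, a in S (S = Phi gives the Weyl
   group W = W^G, S = Phi_M gives W^M) *)
Definition in_gen (S : seq 'cV[R]_n) w : Prop :=
  exists2 s, {subset s <= S} & w = refl_word s.

Definition has_word D w (k : nat) : Prop :=
  exists s : seq 'I_(size D), size s = k /\ w = refl_word [seq D`_(nat_of_ord i) | i : 'I_(size D) <- s].

(* the usual length function l (word length in the simple reflections);
   0 if w is not a product of simple reflections *)
Definition len D w : nat :=
  match excluded_middle_informative
          (exists k, (fun k => pb (has_word D w k)) k) with
  | left ex => ex_minn ex
  | right _ => 0%N
  end.

(* The standard Levi M is given by a subset T of the simple roots *)
Variable (D : seq 'cV[R]_n) (T : {set 'I_(size D)}).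
Definition Theta : seq 'cV[R]_n := [seq D`_(nat_of_ord i) | i : 'I_(size D) <- enum T].

(* roots of A_0 in Lie M: roots in the span of Theta *)
Definition in_span_Theta x : Prop :=
  exists c : 'I_(size Theta) -> R, x = \sum_(i < size Theta) c i *: Theta`_i.
Definition PhiM Phi : seq 'cV[R]_n := [seq a <- Phi | pb (in_span_Theta a)].

(* restriction of characters from A_0 to A_M = orthogonal projection
   onto the orthogonal complement of span Theta *)
Definition ThetaMx : 'M[R]_(size Theta, n) :=
  \matrix_(i < size Theta, j < n) (Theta`_i) j 0.
Definition proj x : 'cV[R]_n :=
  x - ThetaMx^T *m invmx (ThetaMx *m ThetaMx^T) *m ThetaMx *m x.

Definition SigmaAM Phi : seq 'cV[R]_n :=
  undup [seq proj a | a <- Phi & proj a != 0].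
Definition SigmaP Phi : seq 'cV[R]_n :=
  undup [seq proj a | a <- Phi & posb D a && (proj a != 0)].
Definition SigmaPbar Phi : seq 'cV[R]_n := [seq - b | b <- SigmaP Phi].
(* Sigma(w Pbar w^-1) = w . Sigma(Pbar) *)
Definition SigmaWPbar Phi w : seq 'cV[R]_n := [seq w *m b | b <- SigmaPbar Phi].

Definition reduced_in (X : seq 'cV[R]_n) b : Prop :=
  forall t : R, 0 < t < 1 -> t *: b \notin X.
Definition Sred (X : seq 'cV[R]_n) : seq 'cV[R]_n :=
  [seq b <- X | pb (reduced_in X b)].

Definition lM Phi w : nat :=
  count (fun b => b \in Sred (SigmaWPbar Phi w)) (Sred (SigmaP Phi)).

(* W(M): w in W with w^{-1} M w = M (i.e. w(Phi_M) = Phi_M), of minimal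
   length in w W^M *)
Definition in_WM Phi w : Prop :=
  [/\ in_gen Phi w,
      [seq w *m a | a <- PhiM Phi] =i PhiM Phi &
      forall v, in_gen (PhiM Phi) v -> (len D w <= len D (w *m v))%N].

End RootDatum.

(* Main.v *)
Require Import Defs.
From HB Require Import structures.
From mathcomp Require Import all_boot all_order all_algebra.
From Stdlib Require Import ClassicalEpsilon.
From mathcomp Require Import ring zify.
Set Implicit Arguments. Unset Strict Implicit. Unset Printing Implicit Defensive.
Import Order.TTheory GRing.Theory Num.Theory.
Local Open Scope ring_scope.


Lemma pbP (P : Prop) : reflect P (pb P).
Proof. rewrite /pb; case: excluded_middle_informative => h; by constructor. Qed.

Section Basic.
Variables (R : realFieldType) (n : nat).
Implicit Types (a b x y : 'cV[R]_n) (u v : 'M[R]_n).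

Lemma dotC x y : dot x y = dot y x.
Proof. by rewrite /dot !mxE; apply: eq_bigr => i _; rewrite !mxE mulrC. Qed.

Lemma dotE x y : dot x y = \sum_i x i 0 * y i 0.
Proof. by rewrite /dot mxE; apply: eq_bigr => i _; rewrite mxE. Qed.

Lemma dot_ge0 x : 0 <= dot x x.
Proof. rewrite dotE; apply: sumr_ge0 => i _; by rewrite -expr2 sqr_ge0. Qed.

Lemma dot_eq0 x : (dot x x == 0) = (x == 0).
Proof.
apply/idP/idP; last by move/eqP->; rewrite dotE big1 // => i _; rewrite mxE mul0r.
rewrite dotE psumr_eq0; last by move=> i _; by rewrite -expr2 sqr_ge0.
move/allP=> h; apply/eqP/matrixP => i j; rewrite (ord1 j) mxE.
by have := h i (mem_index_enum _); rewrite mulf_eq0 orbb => /eqP.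
Qed.

Lemma dot_gt0 x : x != 0 -> 0 < dot x x.
Proof. by move=> h; rewrite lt_def dot_ge0 dot_eq0 h. Qed.

Lemma dotDl x y z : dot (x + y) z = dot x z + dot y z.
Proof. by rewrite /dot linearD /= mulmxDl mxE. Qed.

Lemma dotZl (t : R) x z : dot (t *: x) z = t * dot x z.
Proof. by rewrite /dot linearZ /= -scalemxAl mxE. Qed.

Lemma dotNl x z : dot (- x) z = - dot x z.
Proof. by rewrite -scaleN1r dotZl mulN1r. Qed.

Lemma dotDr x y z : dot z (x + y) = dot z x + dot z y.
Proof. by rewrite dotC dotDl !(dotC z). Qed.

Lemma dotZr (t : R) x z : dot z (t *: x) = t * dot z x.
Proof. by rewrite dotC dotZl dotC. Qed.

Lemma dot_mul u x y : dot (u *m x) y = dot x (u^T *m y).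
Proof. by rewrite /dot trmx_mul mulmxA. Qed.

Definition orth u := u^T *m u = 1%:M /\ u *m u^T = 1%:M.

Lemma dot_orth u x y : orth u -> dot (u *m x) (u *m y) = dot x y.
Proof. by case=> h _; rewrite dot_mul mulmxA h mul1mx. Qed.

Lemma orthT u : orth u -> orth u^T.
Proof. by case=> h1 h2; split; rewrite trmxK. Qed.

Lemma orthM u v : orth u -> orth v -> orth (u *m v).
Proof.
case=> h1 h2 [k1 k2]; split; rewrite trmx_mul.
  by rewrite mulmxA -(mulmxA _ _ u) h1 mulmx1 k1.
by rewrite mulmxA -(mulmxA _ v) k2 mulmx1 h2.
Qed.

Lemma orth1 : orth 1%:M.
Proof. by split; rewrite trmx1 mulmx1. Qed.

Lemma orth_inj u x y : orth u -> u *m x = u *m y -> x = y.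
Proof. by case=> h _ e; rewrite -(mul1mx x) -(mul1mx y) -h -!mulmxA e. Qed.

Lemma orthTK u x : orth u -> u^T *m (u *m x) = x.
Proof. by case=> h _; rewrite mulmxA h mul1mx. Qed.

Lemma orthKT u x : orth u -> u *m (u^T *m x) = x.
Proof. by case=> _ h; rewrite mulmxA h mul1mx. Qed.

Lemma reflmxE a b : reflmx a *m b = b - cartan b a *: a.
Proof.
rewrite /reflmx /cartan mulmxBl mul1mx -scalemxAl -mulmxA; congr (_ - _).
have -> : a^T *m b = (dot a b)%:M.
  by rewrite /dot; apply/matrixP=> i j; rewrite (ord1 i) (ord1 j) [RHS]mxE eqxx mulr1n.
rewrite mul_mx_scalar scalerA dotC; congr (_ *: _); by rewrite mulrAC.
Qed.

Lemma reflmx_tr a : (reflmx a)^T = reflmx a.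
Proof. by rewrite /reflmx linearB /= trmx1 linearZ /= trmx_mul trmxK. Qed.

Lemma cartan_self a : a != 0 -> cartan a a = 2.
Proof. by move=> h; rewrite /cartan mulfK // gt_eqF // dot_gt0. Qed.

Lemma reflmx_self a : a != 0 -> reflmx a *m a = - a.
Proof. by move=> h; rewrite reflmxE cartan_self // scaler_nat mulr2n opprD addrA subrr add0r. Qed.

Lemma cartan_refl a b : a != 0 -> cartan (reflmx a *m b) a = - cartan b a.
Proof.
move=> h; rewrite reflmxE /cartan dotDl dotNl dotZl.
have hd : dot a a != 0 by rewrite gt_eqF ?dot_gt0.
by rewrite /cartan; field.
Qed.

Lemma reflmxK a : a != 0 -> reflmx a *m reflmx a = 1%:M.
Proof.
move=> h.
have e1 : a^T *m reflmx a = - a^T.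
  by rewrite -[reflmx a]reflmx_tr -trmx_mul reflmx_self // linearN.
rewrite {1}/reflmx mulmxBl mul1mx -scalemxAl -mulmxA e1 mulmxN scalerN opprK.
by rewrite /reflmx addrNK.
Qed.

Lemma orth_refl a : a != 0 -> orth (reflmx a).
Proof. by move=> h; rewrite /orth reflmx_tr reflmxK. Qed.

Lemma trZ (m p : nat) (t : R) (A : 'M[R]_(m, p)) : (t *: A)^T = t *: A^T.
Proof. by apply/matrixP=> i j; rewrite !mxE. Qed.

Lemma reflmxZ (t : R) a : t != 0 -> reflmx (t *: a) = reflmx a.
Proof.
move=> ht; have [->|ha] := eqVneq a 0; first by rewrite scaler0.
rewrite /reflmx dotZl dotZr trZ -scalemxAl -scalemxAr !scalerA.
have hd : dot a a != 0 by rewrite gt_eqF ?dot_gt0.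
have -> : 2 / (t * (t * dot a a)) * t * t = 2 / dot a a by field; rewrite hd ht.
by [].
Qed.

Lemma reflmxN a : reflmx (- a) = reflmx a.
Proof.
have [->|h] := eqVneq a 0; first by rewrite oppr0.
by rewrite -scaleN1r reflmxZ // oppr_eq0 oner_eq0.
Qed.

Lemma reflmx_conj u a : orth u -> u *m reflmx a *m u^T = reflmx (u *m a).
Proof.
case=> h1 h2; rewrite /reflmx mulmxBr mulmxBl mulmx1 h2; congr (_ - _).
rewrite -scalemxAr -scalemxAl dot_mul mulmxA h1 mul1mx.
by rewrite !mulmxA trmx_mul -!mulmxA.
Qed.

End Basic.



Lemma count_pt (T : eqType) (s : seq T) (a b c d : pred T) k :
  {in s, forall x, (a x + k * b x = c x + d x)%N} ->
  (count a s + k * count b s = count c s + count d s)%N.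
Proof.
elim: s => [|x s IH] h /=; first by rewrite muln0.
rewrite mulnDr addnACA h ?mem_head // IH; first by rewrite addnACA.
by move=> y ys; apply: h; rewrite in_cons ys orbT.
Qed.

Lemma count_inj_le (T : eqType) (s : seq T) (P Q : pred T) (h : T -> T) :
  uniq s -> {in s &, injective h} ->
  {in s, forall x, P x -> h x \in s /\ Q (h x)} ->
  (count P s <= count Q s)%N.
Proof.
move=> us hi hm; rewrite -!size_filter.
rewrite -(size_map h); apply: uniq_leq_size.
  rewrite map_inj_in_uniq ?filter_uniq // => x y.
  by rewrite !mem_filter => /andP[_ xs] /andP[_ ys]; apply: hi.
move=> y /mapP[x]; rewrite mem_filter => /andP[px xs] ->.
by have [h1 h2] := hm x xs px; rewrite mem_filter h2 h1.
Qed.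

Section Generic.
Variables (V : zmodType) (X : seq V).
Hypothesis uX : uniq X.
Hypothesis nX : {in X, forall x, - x \notin X}.

Definition Nc (g : V -> V) := count (fun x => - g x \in X) X.

Definition sgood (g : V -> V) :=
  [/\ injective g, {morph g : x / - x} &
      {in X, forall x, (g x \in X) || (- g x \in X)}].

Lemma sgood_xor g x : sgood g -> x \in X -> (g x \in X) = ~~ (- g x \in X).
Proof.
case=> _ _ h xX; have := h x xX; case E: (g x \in X) => /= h2.
  by rewrite (negbTE (nX E)).
by rewrite h2.
Qed.

Lemma cocycle f g : sgood f -> sgood g ->
  (Nc (f \o g) + 2 * count (fun x => (- g x \in X) && (f (g x) \in X)) X
   = Nc f + Nc g)%N.
Proof.
move=> hf hg; case: (hg) => gi gN gX; case: (hf) => fi fN fX.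
pose sig x := if - g x \in X then - g x else g x.
have sX : {in X, forall x, sig x \in X}.
  move=> x xX; rewrite /sig; case: ifP => // h; by have := gX x xX; rewrite h orbF.
have si : {in X &, injective sig}.
  move=> x y xX yX; rewrite /sig.
  case: ifP => hx; case: ifP => hy.
  - by move/oppr_inj/gi.
  - rewrite -gN => /gi ey; by have := nX xX; rewrite ey yX.
  - rewrite -gN => /gi ex; by have := nX yX; rewrite -ex xX.
  - by move/gi.
have pe : perm_eq (map sig X) X.
  have us : uniq (map sig X) by rewrite map_inj_in_uniq.
  have ss : {subset map sig X <= X} by move=> y /mapP[z zX ->]; apply: sX.
  have [_ e] := uniq_min_size us ss (eq_leq (esym (size_map _ _))).
  by apply: uniq_perm.
have -> : Nc f = count (fun x => - f (sig x) \in X) X.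
  by rewrite /Nc -(permP pe) count_map.
rewrite /Nc; apply: count_pt => x xX /=.
rewrite /sig; case: ifP => p /=; last by rewrite muln0.
rewrite fN opprK.
have := sgood_xor hf p; rewrite fN opprK => ->.
by case: (f (g x) \in X).
Qed.

Lemma additive_iff f g : sgood f -> sgood g ->
  Nc (f \o g) = (Nc f + Nc g)%N <->
  {in X, forall x, - g x \in X -> - f (g x) \in X}.
Proof.
move=> hf hg; rewrite -(cocycle hf hg).
set c := count _ X.
have E : (Nc (f \o g) = Nc (f \o g) + 2 * c)%N <-> c = 0%N.
  split => [e|->]; last by rewrite muln0 addn0.
  by move/eqP: e; rewrite -{1}[Nc _]addn0 eqn_add2l eq_sym muln_eq0 => /eqP.
apply: (iff_trans E); rewrite /c; split.
  move/eqP; rewrite -leqn0 leqNgt -has_count => /hasPn h x xX gx.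
  have := h x xX; rewrite gx /= => fx.
  have := sgood_xor hf gx; case: (hf) => _ fN' _; rewrite fN' opprK => e.
  by rewrite e.
move=> h; apply/eqP; rewrite -leqn0 leqNgt -has_count; apply/hasPn => x xX /=.
apply/negP => /andP[gx fgx]; have := h x xX gx.
have := sgood_xor hf gx; case: (hf) => _ fN _; rewrite fN opprK => ->.
by rewrite fgx.
Qed.

Lemma Nc_inv f h : sgood f -> sgood h -> cancel f h -> cancel h f -> Nc f = Nc h.
Proof.
move=> [fi fN fX] [hi hN hX] fh hf; apply/eqP; rewrite eqn_leq.
apply/andP; split.
  apply: (count_inj_le (h := fun x => - f x)) => //.
    by move=> x y _ _ /oppr_inj /fi.
  by move=> x xX p; split => //; rewrite hN fh opprK.
apply: (count_inj_le (h := fun x => - h x)) => //.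
  by move=> x y _ _ /oppr_inj /hi.
by move=> x xX p; split => //; rewrite fN hf opprK.
Qed.

End Generic.



Set Default Proof Using "All".
Section Roots.
Variables (R : realFieldType) (n : nat) (Phi D : seq 'cV[R]_n).
Hypothesis rs : root_system Phi.
Hypothesis bs : base Phi D.
Local Notation V := 'cV[R]_n.
Local Notation pos := (nonneg_comb D).
Local Notation m := (size D).

Lemma uPhi : uniq Phi. Proof. by case: rs. Qed.
Lemma root_neq0 a : a \in Phi -> a != 0.
Proof. by case: rs => _ h _ _ ha; apply: contraNneq h => <-. Qed.
Lemma refl_in a b : a \in Phi -> b \in Phi -> reflmx a *m b \in Phi.
Proof. by case: rs => _ _ h _; apply: h. Qed.
Lemma PhiN a : a \in Phi -> - a \in Phi.
Proof. by move=> h; rewrite -reflmx_self ?root_neq0 // refl_in. Qed.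
Lemma cartan_int a b : a \in Phi -> b \in Phi -> exists z : int, cartan b a = z%:~R.
Proof. by case: rs => _ _ _ h; apply: h. Qed.

Lemma D_in (i : 'I_m) : D`_i \in Phi.
Proof. by case: bs => _ h _ _; apply: h; rewrite mem_nth. Qed.
Lemma D_neq0 (i : 'I_m) : D`_i != 0.
Proof. exact: root_neq0 (D_in i). Qed.
Lemma root_sign a : a \in Phi -> pos a \/ pos (- a).
Proof. by case: bs => _ _ _ h; apply: h. Qed.

Lemma coef_uniq (c c' : 'I_m -> R) :
  \sum_i c i *: D`_i = \sum_i c' i *: D`_i -> forall i, c i = c' i.
Proof.
move=> e i; case: bs => _ _ li _; apply/eqP; rewrite -subr_eq0; apply/eqP.
apply: (li (fun j => c j - c' j)).
by rewrite (eq_bigr (fun j => c j *: D`_j - c' j *: D`_j)) ?sumrB ?e ?subrr // => j _; rewrite scalerBl.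
Qed.

Lemma pos0 : pos 0.
Proof. by exists (fun _ => 0%N); rewrite big1 // => i _; rewrite scale0r. Qed.

Lemma posD x y : pos x -> pos y -> pos (x + y).
Proof.
case=> c -> [c' ->]; exists (fun i => c i + c' i)%N.
by rewrite -big_split; apply: eq_bigr => i _; rewrite natrD scalerDl.
Qed.

Lemma posZ (k : nat) x : pos x -> pos (k%:R *: x).
Proof.
case=> c ->; exists (fun i => k * c i)%N.
by rewrite scaler_sumr; apply: eq_bigr => i _; rewrite natrM scalerA.
Qed.

Lemma posDi (i : 'I_m) : pos D`_i.
Proof.
exists (fun j => (j == i : nat)); rewrite (bigD1 i) //= eqxx scale1r big1 ?addr0 //.
by move=> j /negbTE ->; rewrite scale0r.
Qed.

Lemma pos_sum (I : Type) (r : seq I) (P : pred I) (F : I -> V) :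
  (forall i, P i -> pos (F i)) -> pos (\sum_(i <- r | P i) F i).
Proof. by move=> h; apply: big_ind => //; [exact: pos0 | exact: posD]. Qed.

Lemma pos_neg x : pos x -> pos (- x) -> x = 0.
Proof.
case=> c ex [c' ex'].
have e : \sum_i ((c i + c' i)%N)%:R *: D`_i = \sum_(i < m) (0 : R) *: D`_i.
  transitivity (x + - x).
    rewrite ex' {1}ex -big_split; apply: eq_bigr => i _; by rewrite natrD scalerDl.
  by rewrite subrr big1 // => i _; rewrite scale0r.
have h := coef_uniq e; rewrite ex big1 // => i _.
have := h i; move/eqP; rewrite pnatr_eq0 addn_eq0 => /andP[/eqP -> _].
by rewrite scale0r.
Qed.

Lemma root_not_both a : a \in Phi -> pos a -> pos (- a) -> False.
Proof. by move=> ha p q; have := root_neq0 ha; rewrite (pos_neg p q) eqxx. Qed.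

Definition red (a : V) := (2^-1 *: a) \notin Phi.

Lemma redN a : red (- a) = red a.
Proof.
rewrite /red scalerN; apply/negb_inj; rewrite !negbK.
by apply/idP/idP => /PhiN //; rewrite opprK.
Qed.

Lemma D_red (i : 'I_m) : red D`_i.
Proof.
apply/negP => h; case: (root_sign h) => -[c ec].
- have e : \sum_j (2^-1 * (j == i)%:R) *: D`_j = \sum_j (c j)%:R *: D`_j.
    rewrite -ec (bigD1 i) //= eqxx mulr1 big1 ?addr0 // => j /negbTE ->.
    by rewrite mulr0 scale0r.
  have := coef_uniq e i; rewrite eqxx mulr1 => e2.
  case: (c i) e2 => [|k] e2.
    by move/eqP: e2; rewrite invr_eq0 pnatr_eq0.
  have : (2^-1 : R) < 1 by rewrite invf_lt1 ?ltr1n.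
  by rewrite e2 le_gtF // ler1n.
- have e : \sum_j (- 2^-1 * (j == i)%:R) *: D`_j = \sum_j (c j)%:R *: D`_j.
    rewrite -ec (bigD1 i) //= eqxx mulr1 big1 ?addr0 ?scaleNr // => j /negbTE ->.
    by rewrite mulr0 scale0r.
  have := coef_uniq e i; rewrite eqxx mulr1 => e2.
  have : (- 2^-1 : R) < 0 by rewrite oppr_lt0 invr_gt0 ltr0n.
  by rewrite e2 le_gtF.
Qed.

Lemma dot_sum (I : Type) (r : seq I) (P : pred I) (F : I -> V) y :
  dot (\sum_(i <- r | P i) F i) y = \sum_(i <- r | P i) dot (F i) y.
Proof.
elim/big_rec2: _ => [|i x1 x2 _ <-]; last by rewrite dotDl.
by rewrite /dot trmx0 mul0mx mxE.
Qed.

Lemma refl_pos_nm (i : 'I_m) (c : V) (k : 'I_m -> nat) :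
  c \in Phi -> c = \sum_j (k j)%:R *: D`_j -> (exists2 l, l != i & k l != 0%N) ->
  pos (reflmx D`_i *m c).
Proof.
move=> cP ec [l li kl].
have sP : reflmx D`_i *m c \in Phi by rewrite refl_in ?D_in.
case: (root_sign sP) => // -[mm emm]; exfalso.
pose z := cartan c D`_i.
have e : \sum_j ((k j + mm j)%N)%:R *: D`_j = \sum_j (if j == i then z else 0) *: D`_j.
  rewrite (eq_bigr (fun j => (k j)%:R *: D`_j + (mm j)%:R *: D`_j)); last first.
    by move=> j _; rewrite natrD scalerDl.
  rewrite big_split /= -ec -emm reflmxE opprB addrCA subrr addr0.
  rewrite (bigD1 i) //= eqxx big1 ?addr0 // => j /negbTE ->; by rewrite scale0r.
have := coef_uniq e l; rewrite (negbTE li) => /eqP; rewrite pnatr_eq0 addn_eq0.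
by rewrite (negbTE kl).
Qed.

Lemma refl_pos (i : 'I_m) (c : V) :
  c \in Phi -> red c -> pos c -> c != D`_i -> pos (reflmx D`_i *m c).
Proof.
move=> cP rc [k ek] ci.
case: (boolP [exists l, (l != i) && (k l != 0%N)]) => [/existsP[l /andP[h1 h2]]|].
  by apply: (refl_pos_nm (k := k)) => //; exists l.
rewrite negb_exists => /forallP hk.
have ec : c = (k i)%:R *: D`_i.
  rewrite ek (bigD1 i) //= big1 ?addr0 // => j ji.
  by have := hk j; rewrite ji /= negbK => /eqP ->; rewrite scale0r.
exfalso; case Ek: (k i) => [|[|[|t]]].
- by have := root_neq0 cP; rewrite ec Ek scale0r eqxx.
- by move: ci; rewrite ec Ek scale1r eqxx.
- move/negP: rc; apply; rewrite ec Ek scalerA mulVf ?scale1r ?D_in //.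
  by rewrite pnatr_eq0.
- have [z ez] := cartan_int cP (D_in i).
  have hd : dot D`_i D`_i != 0 by rewrite gt_eqF // dot_gt0 // D_neq0.
  have ht : (t.+3)%:R != 0 :> R by rewrite pnatr_eq0.
  have e : z%:~R = 2 / (t.+3)%:R :> R.
    rewrite -ez ec Ek /cartan dotZr dotZl dotZr; by field; rewrite hd andbT -natrD pnatr_eq0.
  have h0 : (0 : R) < z%:~R by rewrite e divr_gt0 ?ltr0n.
  have h1 : z%:~R < (1 : R) by rewrite e ltr_pdivrMr ?ltr0n // mul1r ltr_nat.
  rewrite ltr0z in h0; rewrite ltrz1 in h1; lia.
Qed.

Lemma refl_neg (i : 'I_m) (c : V) :
  c \in Phi -> red c -> pos (- c) -> c != - D`_i -> pos (- (reflmx D`_i *m c)).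
Proof.
move=> cP rc pc ci; rewrite -mulmxN; apply: refl_pos => //.
- by apply: PhiN.
- by rewrite redN.
- by apply: contra ci => /eqP <-; rewrite opprK.
Qed.

Lemma refl_word_cat (s t : seq V) : refl_word (s ++ t) = refl_word s *m refl_word t.
Proof. elim: s => [|a s IH] /=; by rewrite ?mul1mx // IH mulmxA. Qed.

Lemma refl_word_rcons (s : seq V) a : refl_word (rcons s a) = refl_word s *m reflmx a.
Proof. by rewrite -cats1 refl_word_cat /= mulmx1. Qed.

Lemma refl_word_tr (s : seq V) : (refl_word s)^T = refl_word (rev s).
Proof.
elim: s => [|a s IH] /=; first by rewrite trmx1.
by rewrite trmx_mul IH reflmx_tr rev_cons refl_word_rcons.
Qed.

Lemma gen_orth w : in_gen Phi w -> orth w.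
Proof.
case=> s sP ->; elim: s sP => [|a s IH] sP /=; first exact: orth1.
apply: orthM; first by apply: orth_refl; apply: root_neq0; apply: sP; rewrite mem_head.
by apply: IH => b bs'; apply: sP; rewrite in_cons bs' orbT.
Qed.

Lemma gen_root w a : in_gen Phi w -> a \in Phi -> w *m a \in Phi.
Proof.
case=> s sP -> aP; elim: s sP => [|b s IH] sP /=; first by rewrite mul1mx.
rewrite -mulmxA refl_in //; first by apply: sP; rewrite mem_head.
by apply: IH => c cs; apply: sP; rewrite in_cons cs orbT.
Qed.

Lemma gen_tr w : in_gen Phi w -> in_gen Phi w^T.
Proof. by case=> s sP ->; exists (rev s); [move=> a; rewrite mem_rev; apply: sP | rewrite refl_word_tr]. Qed.

Lemma gen_mul w v : in_gen Phi w -> in_gen Phi v -> in_gen Phi (w *m v).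
Proof.
case=> s sP -> [t tP ->]; exists (s ++ t); last by rewrite refl_word_cat.
by move=> a; rewrite mem_cat => /orP[/sP|/tP].
Qed.

Lemma gen_1 : in_gen Phi 1%:M.
Proof. by exists [::]. Qed.

Lemma gen_refl a : a \in Phi -> in_gen Phi (reflmx a).
Proof. by move=> aP; exists [:: a]; [move=> b; rewrite inE => /eqP -> | rewrite /= mulmx1]. Qed.

Definition sw (s : seq 'I_m) : 'M[R]_n := refl_word [seq D`_(nat_of_ord i) | i : 'I_m <- s].

Lemma gen_sw s : in_gen Phi (sw s).
Proof. by exists [seq D`_(nat_of_ord i) | i : 'I_m <- s] => // a /mapP[i _ ->]; apply: D_in. Qed.

Lemma sw_rcons s i : sw (rcons s i) = sw s *m reflmx D`_i.
Proof. by rewrite /sw map_rcons refl_word_rcons. Qed.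

Lemma gen_red w a : in_gen Phi w -> red a -> red (w *m a).
Proof.
move=> hw; apply: contra => h.
have := gen_root (gen_tr hw) h; rewrite -scalemxAr orthTK //; exact: gen_orth.
Qed.

Lemma gen_inv w : in_gen Phi w -> forall x : V, w^T *m (w *m x) = x.
Proof. by move=> h x; rewrite orthTK //; apply: gen_orth. Qed.

Definition X := [seq a <- Phi | red a && posb D a].

Lemma memX a : (a \in X) = [&& a \in Phi, red a & posb D a].
Proof. by rewrite mem_filter andbC andbA. Qed.

Lemma memXP a : reflect [/\ a \in Phi, red a & pos a] (a \in X).
Proof.
rewrite memX; apply: (iffP idP).
  by case/and3P => h1 h2 /pbP h3.
by case=> h1 h2 h3; rewrite h1 h2; apply/pbP.
Qed.

Lemma uX : uniq X.
Proof. by rewrite filter_uniq // uPhi. Qed.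

Lemma nX : {in X, forall x, - x \notin X}.
Proof.
move=> x /memXP[h1 h2 h3]; apply/negP => /memXP[_ _ h4].
exact: root_not_both h1 h3 h4.
Qed.

Lemma DX (i : 'I_m) : D`_i \in X.
Proof. by apply/memXP; split; [apply: D_in | apply: D_red | apply: posDi]. Qed.

Lemma root_X a : a \in Phi -> red a -> (a \in X) || (- a \in X).
Proof.
move=> aP ra; case: (root_sign aP) => h.
  by apply/orP; left; apply/memXP.
by apply/orP; right; apply/memXP; split => //; [apply: PhiN | rewrite redN].
Qed.

Definition act (w : 'M[R]_n) : V -> V := fun x => w *m x.

Lemma sgood_gen w : in_gen Phi w -> sgood X (act w).
Proof.
move=> hw; split.
- by move=> x y; apply: orth_inj; apply: gen_orth.
- by move=> x; rewrite /act mulmxN.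
- move=> x /memXP[h1 h2 _]; rewrite /act; apply: root_X; first exact: gen_root.
  exact: gen_red.
Qed.

Definition N w := Nc X (act w).

Lemma N1 : N 1%:M = 0%N.
Proof.
apply/eqP; rewrite /N /Nc -leqn0 leqNgt -has_count; apply/hasPn => x xX.
by rewrite /act mul1mx nX.
Qed.

Lemma negX_refl (i : 'I_m) x : x \in X -> (- (reflmx D`_i *m x) \in X) = (x == D`_i).
Proof.
move=> xX; case: eqP => [->|ne]; first by rewrite reflmx_self ?D_neq0 // opprK DX.
case/memXP: (xX) => h1 h2 h3; apply/negP => /memXP[h4 _ h5].
have := refl_pos h1 h2 h3 (introN eqP ne) => h6.
by apply: (root_not_both _ h6 h5); rewrite refl_in ?D_in.
Qed.

Lemma NA w (i : 'I_m) : in_gen Phi w ->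
  (N (w *m reflmx D`_i) + 2 * (- (w *m D`_i) \in X) = N w + 1)%N.
Proof.
move=> hw; have hs := sgood_gen (gen_refl (D_in i)).
have := cocycle uX nX (sgood_gen hw) hs.
have -> : Nc X (act w \o act (reflmx D`_i)) = N (w *m reflmx D`_i).
  by rewrite /N /Nc; apply: eq_count => x /=; rewrite /act mulmxA.
have -> : Nc X (act (reflmx D`_i)) = 1%N.
  rewrite /Nc (eq_in_count (a2 := pred1 D`_i)); first by rewrite count_uniq_mem ?uX ?DX.
  by move=> x xX; rewrite /= /act negX_refl.
rewrite (eq_in_count (a2 := fun x => (x == D`_i) && (- (w *m D`_i) \in X))).
  case: (- (w *m D`_i) \in X); last by rewrite (eq_count (a2 := pred0)) ?count_pred0 // => x; rewrite andbF.
  by rewrite (eq_count (a2 := pred1 D`_i)) ?count_uniq_mem ?uX ?DX // => x; rewrite /= andbT.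
move=> x xX /=; rewrite /act negX_refl //; case: eqP => //= ->.
by rewrite reflmx_self ?D_neq0 // mulmxN.
Qed.

Lemma sw_cons i s : sw (i :: s) = reflmx D`_i *m sw s.
Proof. by []. Qed.

Lemma sw_cat s t : sw (s ++ t) = sw s *m sw t.
Proof. by rewrite /sw map_cat refl_word_cat. Qed.

Lemma gen_pos_refl h : forall (a : V) (k : 'I_m -> nat), a \in Phi ->
  a = \sum_j (k j)%:R *: D`_j -> (\sum_j k j <= h)%N -> exists s, reflmx a = sw s.
Proof.
elim: h => [|h IH] a k aP ea hk.
  exfalso; have := root_neq0 aP; rewrite ea big1 ?eqxx // => j _.
  by move: hk; rewrite leqn0 sum_nat_eq0 => /forallP/(_ j)/implyP/(_ isT)/eqP->; rewrite scale0r.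
case: (boolP [exists j, [forall l, (l != j) ==> (k l == 0%N)]]).
  case/existsP=> j /forallP hj.
  have ea' : a = (k j)%:R *: D`_j.
    rewrite ea (bigD1 j) //= big1 ?addr0 // => l lj.
    by have := hj l; rewrite lj /= => /eqP ->; rewrite scale0r.
  have kj : (k j)%:R != 0 :> R.
    by apply: contraNneq (root_neq0 aP) => e; rewrite ea' e scale0r.
  by exists [:: j]; rewrite ea' reflmxZ // sw_cons /sw /= mulmx1.
rewrite negb_exists => /forallP hnm.
have [j hj] : exists j, 0 < (k j)%:R * dot D`_j a.
  case: (boolP [exists j, 0 < (k j)%:R * dot D`_j a]) => [/existsP //|]; rewrite negb_exists => /forallP hn.
  have : dot a a <= 0.
    rewrite {1}ea dot_sum; apply: sumr_le0 => j _; rewrite dotZl leNgt; exact: hn.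
  by rewrite leNgt dot_gt0 ?root_neq0.
have kj0 : (k j != 0)%N by apply: contraTneq hj => ->; rewrite mul0r ltxx.
have dj : 0 < dot D`_j a by move: hj; rewrite pmulr_rgt0 // ltr0n lt0n.
have [l lj kl] : exists2 l, l != j & k l != 0%N.
  have := hnm j; rewrite negb_forall => /existsP[l]; rewrite negb_imply => /andP[h1 h2].
  by exists l.
have bP : reflmx D`_j *m a \in Phi by rewrite refl_in ?D_in.
have [mm emm] := refl_pos_nm aP ea (ex_intro2 _ _ l lj kl).
set z := cartan a D`_j.
have zpos : 0 < z.
  rewrite /z /cartan dotC divr_gt0 ?mulr_gt0 ?ltr0n // dot_gt0 //; exact: D_neq0.
pose c' l := (k l)%:R - (if l == j then z else 0).
have ecoef : forall l, (mm l)%:R = c' l.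
  apply: coef_uniq; rewrite -emm reflmxE -/z {1}ea.
  rewrite [RHS](eq_bigr (fun l => (k l)%:R *: D`_l - (if l == j then z else 0) *: D`_l)); last first.
    by move=> i _; rewrite /c' scalerBl.
  rewrite sumrB; congr (_ - _).
  rewrite (bigD1 j) //= eqxx big1 ?addr0 //.
  by move=> i /negbTE ->; rewrite scale0r.
have hsum : (\sum_l mm l < \sum_l k l)%N.
  have e : \sum_l ((mm l)%:R : R) = \sum_l (k l)%:R - z.
    rewrite (eq_bigr _ (fun l _ => ecoef l)) /c' sumrB; congr (_ - _).
    by rewrite (bigD1 j) //= eqxx big1 ?addr0 // => i /negbTE ->.
  by rewrite -(ltr_nat R) !natr_sum e ltrBlDr ltrDl.
have hs' : (\sum_l mm l <= h)%N by rewrite -ltnS; exact: leq_trans hsum hk.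
have [s es] := IH _ _ bP emm hs'.
exists (j :: rcons s j).
have ea2 : a = reflmx D`_j *m (reflmx D`_j *m a) by rewrite mulmxA reflmxK ?D_neq0 ?mul1mx.
rewrite {1}ea2 -reflmx_conj; last exact: orth_refl (D_neq0 j).
by rewrite es reflmx_tr sw_cons sw_rcons mulmxA.
Qed.

Lemma gen_refl_word a : a \in Phi -> exists s, reflmx a = sw s.
Proof.
move=> aP; case: (root_sign aP) => -[k ek].
  exact: gen_pos_refl aP ek (leqnn _).
rewrite -reflmxN; apply: gen_pos_refl (PhiN aP) ek (leqnn _).
Qed.

Lemma gen_word w : in_gen Phi w -> exists s, w = sw s.
Proof.
case=> t tP ->; elim: t tP => [|a t IH] tP; first by exists [::].
have [s1 e1] := gen_refl_word (tP a (mem_head _ _)).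
have [s2 e2] : exists s, refl_word t = sw s by apply: IH => b bt; apply: tP; rewrite in_cons bt orbT.
by exists (s1 ++ s2); rewrite sw_cat /= e1 e2.
Qed.

Lemma sw_nil : sw [::] = 1%:M. Proof. by []. Qed.

Lemma NB s : (N (sw s) <= size s)%N.
Proof.
elim/last_ind: s => [|s i IH]; first by rewrite sw_nil N1.
have := NA i (gen_sw s); rewrite -sw_rcons size_rcons; lia.
Qed.

Lemma exch s (i : 'I_m) : pos (- (sw s *m D`_i)) ->
  exists s', size s' = (size s).-1 /\ sw s *m reflmx D`_i = sw s'.
Proof.
elim: s => [|j t IH] h.
  by exfalso; move: h; rewrite sw_nil mul1mx; apply: root_not_both (D_in i) (posDi i).
have gP : sw t *m D`_i \in Phi by apply: gen_root; [apply: gen_sw | apply: D_in].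
have gr : red (sw t *m D`_i) by apply: gen_red; [apply: gen_sw | apply: D_red].
have ho : orth (sw t) by apply: gen_orth; apply: gen_sw.
case: (root_sign gP) => hg.
  have ej : sw t *m D`_i = D`_j.
    apply/eqP; apply/negPn/negP => ne.
    have := refl_pos gP gr hg ne; move: h; rewrite sw_cons -mulmxA => h1 h2.
    by apply: (root_not_both _ h2 h1); rewrite refl_in ?D_in.
  exists t; split => //; rewrite sw_cons -ej -reflmx_conj //.
  case: (ho) => ho1 _; by rewrite -!mulmxA (mulmxA (sw t)^T) ho1 mul1mx reflmxK ?D_neq0 // mulmx1.
have [t' [st' et']] := IH hg.
exists (j :: t'); split.
  have tn : t != [::].
    apply/eqP => tn; move: hg; rewrite tn sw_nil mul1mx; exact: root_not_both (D_in i) (posDi i).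
  by rewrite /= st' prednK // lt0n size_eq0.
by rewrite sw_cons -mulmxA et'.
Qed.

Lemma count_eq0_mem (T : eqType) (P : pred T) (s : seq T) x :
  count P s = 0%N -> x \in s -> ~~ P x.
Proof.
move/eqP; rewrite -leqn0 leqNgt -has_count => /hasPn h xs; exact: h.
Qed.

Lemma C0 k : forall s, (size s <= k)%N -> N (sw s) = 0%N -> sw s = 1%:M.
Proof.
elim: k => [|k IH] s.
  by rewrite leqn0 => /eqP/size0nil ->.
case/lastP: s => [//|s i] hs hN.
have hw := gen_sw (rcons s i).
have h1 := count_eq0_mem hN (DX i); rewrite /act in h1.
have wP : sw (rcons s i) *m D`_i \in Phi by rewrite gen_root ?D_in.
have := root_X wP (gen_red hw (D_red i)); rewrite (negbTE h1) orbF => /memXP[_ _ hp].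
have e : sw s *m D`_i = - (sw (rcons s i) *m D`_i).
  by rewrite sw_rcons -mulmxA reflmx_self ?D_neq0 // mulmxN opprK.
have [s' [ss' es']] : exists s', size s' = (size s).-1 /\ sw s *m reflmx D`_i = sw s'.
  by apply: exch; rewrite e opprK.
rewrite sw_rcons es'; apply: IH.
  by rewrite ss'; move: hs; rewrite size_rcons; lia.
by rewrite -es' -sw_rcons.
Qed.

Lemma C k : forall w, in_gen Phi w -> N w = k -> has_word D w k.
Proof.
elim: k => [|k IH] w hw hN.
  have [s es] := gen_word hw.
  exists [::]; split => //; rewrite -[refl_word _]/(sw [::]) sw_nil es.
  by apply: (C0 (leqnn _)); rewrite -es.
case: (boolP [exists i : 'I_m, - (w *m D`_i) \in X]); last first.
  rewrite negb_exists => /forallP hi; exfalso.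
  have : N w = 0%N.
    apply/eqP; rewrite /N /Nc -leqn0 leqNgt -has_count; apply/hasPn => x /memXP[xP _ [c ec]].
    rewrite /act {1}ec mulmx_sumr; apply/negP => /memXP[_ _ h2].
    have h3 : pos (\sum_(j < m) w *m ((c j)%:R *: D`_j)).
      apply: pos_sum => j _; rewrite -scalemxAr; apply: posZ.
      have wP : w *m D`_j \in Phi by rewrite gen_root ?D_in.
      have := root_X wP (gen_red hw (D_red j)); rewrite (negbTE (hi j)) orbF.
      by case/memXP.
    apply: (root_not_both _ h3 h2).
    by rewrite -mulmx_sumr -ec; apply: gen_root.
  by rewrite hN.
case/existsP => i hi.
have := NA i hw; rewrite hi hN => e.
have [s [ss es]] : has_word D (w *m reflmx D`_i) k.
  by apply: IH; [apply: gen_mul => //; apply: gen_refl; apply: D_in | lia].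
exists (rcons s i); split; first by rewrite size_rcons ss.
have es' : w *m reflmx D`_i = sw s := es.
change (w = sw (rcons s i)).
by rewrite sw_rcons -es' -mulmxA reflmxK ?D_neq0 // mulmx1.
Qed.

Lemma len_N w : in_gen Phi w -> len D w = N w.
Proof.
move=> hw; rewrite /len; case: excluded_middle_informative => [ex|nex]; last first.
  by exfalso; apply: nex; exists (N w); apply/pbP; apply: C.
case: ex_minnP => k0 /pbP [s [ss es]] hmin.
apply/eqP; rewrite eqn_leq; apply/andP; split.
  by apply: hmin; apply/pbP; apply: C.
by rewrite -ss es; apply: (NB s).
Qed.

Variable T : {set 'I_m}.
Local Notation Th := (Theta T).
Local Notation TM := (ThetaMx T).

Lemma size_Th : size Th = #|T|.
Proof. by rewrite size_map -cardE. Qed.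

Definition eT (k : 'I_(size Th)) : 'I_m := enum_val (cast_ord size_Th k).

Lemma eT_in k : eT k \in T.
Proof. exact: enum_valP. Qed.

Lemma eT_inj : injective eT.
Proof. by move=> k1 k2 /enum_val_inj /cast_ord_inj. Qed.

Lemma Th_nth (k : 'I_(size Th)) : Th`_k = D`_(eT k).
Proof.
rewrite /Theta (nth_map (eT k)); last by rewrite -cardE -size_Th.
by rewrite /eT {2}(enum_val_nth (enum_val (cast_ord size_Th k))).
Qed.

Lemma eT_surj j : j \in T -> exists k, eT k = j.
Proof.
move=> jT; exists (cast_ord (esym size_Th) (enum_rank_in jT j)).
by rewrite /eT cast_ordKV enum_rankK_in.
Qed.

Lemma TM_mul (y : 'cV[R]_(size Th)) : TM^T *m y = \sum_k y k 0 *: Th`_k.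
Proof.
apply/matrixP => i j; rewrite (ord1 j) !mxE summxE; apply: eq_bigr => k _.
by rewrite !mxE mulrC.
Qed.

Definition cconv (y : 'I_(size Th) -> R) (j : 'I_m) : R :=
  \sum_k (if eT k == j then y k else 0).

Lemma Th_conv (y : 'I_(size Th) -> R) :
  \sum_k y k *: Th`_k = \sum_j cconv y j *: D`_j.
Proof.
rewrite /cconv (eq_bigr (fun j => \sum_k (if eT k == j then y k else 0) *: D`_j)); last first.
  by move=> j _; rewrite scaler_suml.
rewrite exchange_big /=; apply: eq_bigr => k _.
rewrite (bigD1 (eT k)) //= eqxx big1 ?addr0 ?Th_nth // => j /negbTE.
by rewrite eq_sym => ->; rewrite scale0r.
Qed.

Lemma cconv_eT y k : cconv y (eT k) = y k.
Proof.
rewrite /cconv (bigD1 k) //= eqxx big1 ?addr0 // => k' /negbTE h.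
by case: eqP => // /eT_inj e; rewrite e eqxx in h.
Qed.

Lemma cconv_out y j : j \notin T -> cconv y j = 0.
Proof.
move=> jT; rewrite /cconv big1 // => k _; case: eqP => // e.
by move: jT; rewrite -e eT_in.
Qed.

Definition inspan (x : V) := exists y : 'cV[R]_(size Th), x = TM^T *m y.

Lemma span_iff x : in_span_Theta T x <-> inspan x.
Proof.
split=> [[c ->]|[y ->]].
  by exists (\col_k c k); rewrite TM_mul; apply: eq_bigr => k _; rewrite mxE.
by exists (fun k => y k 0); rewrite TM_mul.
Qed.

Lemma inspan_coef x (r : 'I_m -> R) : x = \sum_j r j *: D`_j -> inspan x ->
  forall j, j \notin T -> r j = 0.
Proof.
move=> ex [y ey] j jT; rewrite ey TM_mul Th_conv in ex.
by rewrite -(coef_uniq ex j) cconv_out.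
Qed.

Lemma inspan0 : inspan 0.
Proof. by exists 0; rewrite mulmx0. Qed.

Lemma inspanD x y : inspan x -> inspan y -> inspan (x + y).
Proof. by case=> a -> [b ->]; exists (a + b); rewrite mulmxDr. Qed.

Lemma inspanZ t x : inspan x -> inspan (t *: x).
Proof. by case=> a ->; exists (t *: a); rewrite scalemxAr. Qed.

Lemma inspanN x : inspan x -> inspan (- x).
Proof. by move=> h; rewrite -scaleN1r; apply: inspanZ. Qed.

Lemma inspanB x y : inspan x -> inspan y -> inspan (x - y).
Proof. by move=> h1 h2; apply: inspanD => //; apply: inspanN. Qed.

Lemma inspan_sum (I : Type) (r : seq I) (P : pred I) (F : I -> V) :
  (forall i, P i -> inspan (F i)) -> inspan (\sum_(i <- r | P i) F i).
Proof. by move=> h; apply: big_ind => //; [exact: inspan0 | exact: inspanD]. Qed.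

Lemma inspan_Th (k : 'I_(size Th)) : inspan Th`_k.
Proof.
exists (\col_i (i == k)%:R); rewrite TM_mul (bigD1 k) //= big1 ?addr0.
  by rewrite mxE eqxx scale1r.
by move=> i /negbTE ik; rewrite mxE ik scale0r.
Qed.

Lemma inspan_D j : j \in T -> inspan D`_j.
Proof. by move=> jT; have [k <-] := eT_surj jT; rewrite -Th_nth; apply: inspan_Th. Qed.

Lemma coef_inspan (r : 'I_m -> R) : (forall j, j \notin T -> r j = 0) ->
  inspan (\sum_j r j *: D`_j).
Proof.
move=> h; apply: inspan_sum => j _; case: (boolP (j \in T)) => jT.
  by apply: inspanZ; apply: inspan_D.
by rewrite h // scale0r; apply: inspan0.
Qed.

Lemma Th_lin (v : 'cV[R]_(size Th)) : TM^T *m v = 0 -> v = 0.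
Proof.
rewrite TM_mul Th_conv => e.
have e' : \sum_j cconv (fun k => v k 0) j *: D`_j = \sum_(j < m) (0 : R) *: D`_j.
  by rewrite e big1 // => j _; rewrite scale0r.
apply/matrixP => k j; rewrite (ord1 j) mxE.
by rewrite -(cconv_eT (fun k => v k 0)) (coef_uniq e').
Qed.

Definition G := TM *m TM^T.

Lemma G_unit : G \in unitmx.
Proof.
rewrite -row_free_unit; apply: inj_row_free => v vG.
have : dot (TM^T *m v^T) (TM^T *m v^T) = 0.
  by rewrite /dot trmx_mul trmxK !trmxK -(mulmxA v) (mulmxA TM) (mulmxA v) -/G vG !mul0mx mxE.
move/eqP; rewrite dot_eq0 => /eqP /Th_lin e.
by rewrite -[v]trmxK e trmx0.
Qed.

Definition K := TM^T *m invmx G *m TM.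

Lemma projE x : proj T x = x - K *m x.
Proof. by []. Qed.

Lemma TM_K : TM *m K = TM.
Proof. by rewrite /K !mulmxA -/G mulmxV ?G_unit // mul1mx. Qed.

Lemma K_TM : K *m TM^T = TM^T.
Proof. by rewrite /K -!mulmxA -/G mulVmx ?G_unit // mulmx1. Qed.

Lemma TM_proj x : TM *m proj T x = 0.
Proof. by rewrite projE mulmxBr mulmxA TM_K subrr. Qed.

Lemma proj_eq0 x : proj T x = 0 <-> inspan x.
Proof.
split.
  by move/eqP; rewrite projE subr_eq0 => /eqP ->; exists (invmx G *m TM *m x); rewrite /K !mulmxA.
by case=> y ->; rewrite projE mulmxA K_TM subrr.
Qed.

Lemma projD x y : proj T (x + y) = proj T x + proj T y.
Proof. by rewrite !projE mulmxDr opprD addrACA. Qed.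

Lemma projZ t x : proj T (t *: x) = t *: proj T x.
Proof. by rewrite !projE scalerBr scalemxAr. Qed.

Lemma projN x : proj T (- x) = - proj T x.
Proof. by rewrite -!scaleN1r projZ. Qed.

Lemma Kx_span x : inspan (K *m x).
Proof. by exists (invmx G *m TM *m x); rewrite /K !mulmxA. Qed.

Lemma dot_span_proj y x : dot (TM^T *m y) (proj T x) = 0.
Proof. by rewrite /dot trmx_mul trmxK -mulmxA TM_proj mulmx0 mxE. Qed.

Lemma dot_mulr (u : 'M[R]_n) a b : dot a (u *m b) = dot (u^T *m a) b.
Proof. by rewrite dotC dot_mul dotC. Qed.

Lemma proj_equi (u : 'M[R]_n) : orth u -> (forall x, inspan x -> inspan (u *m x)) ->
  (forall x, inspan x -> inspan (u^T *m x)) -> forall x, u *m proj T x = proj T (u *m x).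
Proof.
move=> ho h1 h2 x; apply/eqP; rewrite -subr_eq0; apply/eqP.
set z := _ - _.
have ez : z = K *m (u *m x) - u *m (K *m x).
  by rewrite /z !projE mulmxBr opprB addrC addrA addrNK addrC.
have [y0 ey0] : inspan z by rewrite ez; apply: inspanB; [apply: Kx_span | apply: h1; apply: Kx_span].
have hz : forall y, dot (TM^T *m y) z = 0.
  have dN : forall a b : V, dot a (- b) = - dot a b by move=> a b; rewrite dotC dotNl dotC.
  move=> y; rewrite /z dotDr dN dot_span_proj oppr0 addr0 dot_mulr.
  by have [y' ->] := h2 _ (ex_intro _ y erefl); rewrite dot_span_proj.
apply/eqP; rewrite -dot_eq0; apply/eqP; rewrite {1}ey0; exact: hz.
Qed.

Local Notation PM := (PhiM T Phi).
Local Notation prj := (proj T).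

Lemma memPMP a : reflect (a \in Phi /\ inspan a) (a \in PM).
Proof.
rewrite /PhiM mem_filter; apply: (iffP andP) => [[/pbP h1 h2]|[h1 h2]].
  by split => //; apply/span_iff.
by split => //; apply/pbP; apply/span_iff.
Qed.

Definition Mgood (u : 'M[R]_n) := [/\ in_gen Phi u, {in PM, forall a, u *m a \in PM} &
  {in PM, forall a, u^T *m a \in PM}].

Lemma Mgood_T u : Mgood u -> Mgood u^T.
Proof. by case=> h1 h2 h3; split; rewrite ?trmxK //; apply: gen_tr. Qed.

Lemma Mgood_mul u v : Mgood u -> Mgood v -> Mgood (u *m v).
Proof.
case=> h1 h2 h3 [k1 k2 k3]; split; first exact: gen_mul.
  by move=> a aP; rewrite -mulmxA; apply: h2; apply: k2.
by move=> a aP; rewrite trmx_mul -mulmxA; apply: k3; apply: h3.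
Qed.

Lemma Mgood_orth u : Mgood u -> orth u.
Proof. by case=> h _ _; apply: gen_orth. Qed.

Lemma Th_PM (k : 'I_(size Th)) : Th`_k \in PM.
Proof. by apply/memPMP; split; [rewrite Th_nth; apply: D_in | apply: inspan_Th]. Qed.

Lemma Mgood_span u : Mgood u -> forall x, inspan x -> inspan (u *m x).
Proof.
case=> _ h _ x [y ->]; rewrite TM_mul mulmx_sumr; apply: inspan_sum => k _.
rewrite -scalemxAr; apply: inspanZ.
by have /memPMP[] := h _ (Th_PM k).
Qed.

Lemma Mgood_proj u x : Mgood u -> u *m prj x = prj (u *m x).
Proof.
move=> hu; apply: proj_equi; first exact: Mgood_orth.
  exact: Mgood_span.
exact: Mgood_span (Mgood_T hu).
Qed.

Local Notation SAM := (SigmaAM T Phi).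
Local Notation SP := (SigmaP T Phi).

Lemma memSAM c : c \in SAM <-> exists a, [/\ a \in Phi, prj a != 0 & c = prj a].
Proof.
rewrite /SigmaAM mem_undup; split.
  by case/mapP => a; rewrite mem_filter => /andP[h1 h2] ->; exists a.
by case=> a [h1 h2 ->]; apply: map_f; rewrite mem_filter h1 h2.
Qed.

Lemma memSP c : c \in SP <-> exists a, [/\ a \in Phi, pos a, prj a != 0 & c = prj a].
Proof.
rewrite /SigmaP mem_undup; split.
  case/mapP => a; rewrite mem_filter => /andP[/andP[/pbP h1 h2] h3] ->.
  by exists a.
by case=> a [h1 h2 h3 ->]; apply: map_f; rewrite mem_filter h1 h3 andbT /posb andbT; apply/pbP.
Qed.

Lemma SP_SAM c : c \in SP -> c \in SAM.
Proof. by case/memSP => a [h1 _ h3 ->]; apply/memSAM; exists a. Qed.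

Lemma SAM_neq0 c : c \in SAM -> c != 0.
Proof. by case/memSAM => a [_ h ->]. Qed.

Lemma SAMN c : c \in SAM -> - c \in SAM.
Proof.
case/memSAM => a [h1 h2 ->]; apply/memSAM; exists (- a).
by rewrite projN oppr_eq0 h2 PhiN.
Qed.

Lemma sep a1 a2 (t : R) : a1 \in Phi -> a2 \in Phi -> pos a1 -> pos a2 -> 0 < t ->
  prj a1 = - (t *: prj a2) -> prj a1 = 0.
Proof.
move=> _ _ [k ek] [k' ek'] tp e.
have hs : inspan (a1 + t *: a2).
  by apply/proj_eq0; rewrite projD projZ e addNr.
have e2 : a1 + t *: a2 = \sum_j ((k j)%:R + t * (k' j)%:R) *: D`_j.
  rewrite ek ek' scaler_sumr -big_split; apply: eq_bigr => j _.
  by rewrite scalerDl scalerA.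
have hz := inspan_coef e2 hs.
apply/proj_eq0; rewrite ek; apply: coef_inspan => j jT.
have /eqP := hz j jT; rewrite paddr_eq0 ?ler0n ?mulr_ge0 ?ler0n ?ltW //.
by case/andP => /eqP.
Qed.

Lemma SP_excl c : c \in SP -> - c \in SP -> False.
Proof.
case/memSP => a1 [h1 h2 h3 e1] /memSP[a2 [k1 k2 k3 e2]].
have := sep h1 k1 h2 k2 ltr01 (t := 1).
rewrite scale1r -e2 -e1 opprK => /(_ erefl) c0; by move: h3; rewrite -e1 c0 eqxx.
Qed.

Lemma SAM_dich c : c \in SAM -> (c \in SP) || (- c \in SP).
Proof.
case/memSAM => a [h1 h2 ->]; case: (root_sign h1) => h.
  by apply/orP; left; apply/memSP; exists a.
apply/orP; right; apply/memSP; exists (- a); rewrite projN oppr_eq0 h2 PhiN //.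
Qed.

Lemma SP_xor c : c \in SAM -> (c \in SP) = ~~ (- c \in SP).
Proof.
move=> h; have := SAM_dich h; case E: (c \in SP) => /= h2.
  by apply/esym/negP => h3; apply: (SP_excl E h3).
by rewrite h2.
Qed.

Lemma scaleSP c (t : R) : c \in SP -> 0 < t -> t *: c \in SAM -> t *: c \in SP.
Proof.
move=> cP tp tc; have := SAM_dich tc; case/orP => // /memSP [a2 [k1 k2 k3 e2]].
case/memSP: cP => a1 [h1 h2 h3 e1]; exfalso.
have := sep k1 h1 k2 h2 tp; rewrite -e1 -e2 => /(_ erefl) e0.
by move: k3; rewrite -e2 e0 eqxx.
Qed.

Lemma pos_proj a : a \in Phi -> prj a != 0 -> pos a <-> prj a \in SP.
Proof.
move=> aP a0; split => [h|h]; first by apply/memSP; exists a.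
case: (root_sign aP) => // h2; exfalso; apply: (SP_excl h).
by apply/memSP; exists (- a); rewrite projN oppr_eq0 a0 PhiN.
Qed.

Lemma negpos_proj a : a \in Phi -> prj a != 0 -> pos (- a) <-> - prj a \in SP.
Proof.
move=> aP a0; rewrite -projN; apply: pos_proj; first exact: PhiN.
by rewrite projN oppr_eq0.
Qed.

Lemma Mgood_SAM u c : Mgood u -> c \in SAM -> u *m c \in SAM.
Proof.
move=> hu /memSAM[a [h1 h2 ->]]; apply/memSAM; exists (u *m a); split.
- by case: hu => g _ _; apply: gen_root.
- rewrite -Mgood_proj //; apply: contra h2 => /eqP e.
  by apply/eqP; apply: (orth_inj (Mgood_orth hu)); rewrite e mulmx0.
- by rewrite Mgood_proj.
Qed.

Definition redM (c : V) := forall t : R, 0 < t < 1 -> t *: c \notin SAM.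

Lemma Mgood_redM u c : Mgood u -> redM c -> redM (u *m c).
Proof.
move=> hu h t ht; apply/negP => h2; have := Mgood_SAM (Mgood_T hu) h2.
rewrite -scalemxAr orthTK; last exact: Mgood_orth.
by move=> h3; move: (h t ht); rewrite h3.
Qed.

Lemma redMN c : redM c -> redM (- c).
Proof.
move=> h t ht; apply/negP => h2; have := SAMN h2; rewrite scalerN opprK.
by apply/negP; apply: h.
Qed.

Local Notation Y := (Sred SP).

Lemma memY c : c \in Y <-> c \in SP /\ redM c.
Proof.
rewrite /Sred mem_filter; split.
  case/andP => /pbP h1 h2; split => // t ht; apply/negP => h3.
  by have := h1 t ht; rewrite scaleSP //; case/andP: ht.
case=> h1 h2; rewrite h1 andbT; apply/pbP => t ht; apply/negP => h3.
by have := h2 t ht; rewrite SP_SAM.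
Qed.

Lemma uY : uniq Y.
Proof. by rewrite filter_uniq // undup_uniq. Qed.

Lemma nY : {in Y, forall x, - x \notin Y}.
Proof.
move=> c /memY[h1 _]; apply/negP => /memY[h2 _]; exact: SP_excl h1 h2.
Qed.

Lemma sgood_M u : Mgood u -> sgood Y (act u).
Proof.
move=> hu; split.
- by move=> x y; apply: orth_inj; apply: Mgood_orth.
- by move=> x; rewrite /act mulmxN.
- move=> c /memY[h1 h2]; rewrite /act.
  have h3 := Mgood_SAM hu (SP_SAM h1); have h4 := Mgood_redM hu h2.
  case/orP: (SAM_dich h3) => h5; apply/orP; [left|right]; apply/memY; split => //.
  exact: redMN.
Qed.

Lemma memSWP w c : orth w ->
  (c \in SigmaWPbar T Phi w) = (- (w^T *m c) \in SP).
Proof.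
move=> ho; apply/idP/idP.
  case/mapP => b /mapP[b' b'P ->] ->.
  by rewrite !mulmxN orthTK // opprK.
move=> h; apply/mapP; exists (w^T *m c); last by rewrite orthKT.
by apply/mapP; exists (- (w^T *m c)); rewrite ?opprK.
Qed.

Lemma lM_N w : Mgood w -> lM T Phi w = Nc Y (act w^T).
Proof.
move=> hw; have ho := Mgood_orth hw.
rewrite /lM /Nc; apply: eq_in_count => c cY /=; rewrite /act.
case/memY: (cY) => cSP rc.
rewrite /Sred mem_filter memSWP //; apply/idP/idP.
  case/andP => _ h; apply/memY; split => //.
  by apply: redMN; apply: Mgood_redM => //; apply: Mgood_T.
case/memY => h1 _; rewrite h1 andbT; apply/pbP => t ht; apply/negP.
rewrite memSWP // => h3.
have := SAMN (SP_SAM h3); rewrite opprK => h4.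
have := Mgood_SAM hw h4; rewrite orthKT // => h5.
by move: (rc t ht); rewrite h5.
Qed.

Lemma lM_Nw w : Mgood w -> lM T Phi w = Nc Y (act w).
Proof.
move=> hw; rewrite lM_N //; apply: (Nc_inv uY).
- exact: sgood_M (Mgood_T hw).
- exact: sgood_M hw.
- by move=> x; rewrite /act orthKT //; apply: Mgood_orth.
- by move=> x; rewrite /act orthTK //; apply: Mgood_orth.
Qed.

Lemma count_le_in (U : eqType) (s : seq U) (P Q : pred U) :
  {in s, forall x, P x -> Q x} -> (count P s <= count Q s)%N.
Proof.
elim: s => [//|x s IH] hPQ /=.
have h' : {in s, forall y, P y -> Q y} by move=> y ys; apply: hPQ; rewrite in_cons ys orbT.
case Px: (P x).
  by rewrite (hPQ x (mem_head _ _) Px) /= ltnS IH.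
by rewrite add0n (leq_trans (IH h')) // leq_addl.
Qed.

Lemma count_lt (U : eqType) (s : seq U) (P Q : pred U) x0 :
  {in s, forall x, P x -> Q x} -> x0 \in s -> Q x0 -> ~~ P x0 ->
  (count P s < count Q s)%N.
Proof.
elim: s => [//|x s IH] hPQ /=.
have h' : {in s, forall y, P y -> Q y} by move=> y ys; apply: hPQ; rewrite in_cons ys orbT.
rewrite in_cons => /orP[/eqP <-|x0s] q0 p0.
  by rewrite (negbTE p0) q0 /= add0n add1n ltnS count_le_in.
case Px: (P x).
  by rewrite (hPQ x (mem_head _ _) Px) /= ltn_add2l IH.
by rewrite add0n (leq_trans (IH h' x0s q0 p0)) // leq_addl.
Qed.


Definition mu (c : V) := count (fun x => pb (exists t : R, 0 < t < 1 /\ x = t *: c)) SAM.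

Lemma descent_k k : forall c, (mu c <= k)%N -> c \in SP -> exists s : R, 0 < s /\ s *: c \in Y.
Proof.
elim: k => [|k IH] c hk cSP.
  case: (pbP (redM c)) => [rc|nr]; first by exists 1; rewrite ltr01 scale1r; split => //; apply/memY.
  exfalso; have [t [ht tc]] : exists t : R, 0 < t < 1 /\ t *: c \in SAM.
    case: (pbP (exists t : R, 0 < t < 1 /\ t *: c \in SAM)) => // nex; exfalso.
    by apply: nr => t ht; apply/negP => h; apply: nex; exists t.
  move: hk; rewrite leqn0 -leqn0 leqNgt -has_count => /hasPn/(_ _ tc) /pbP; apply.
  by exists t.
case: (pbP (redM c)) => [rc|nr]; first by exists 1; rewrite ltr01 scale1r; split => //; apply/memY.
have [t [ht tc]] : exists t : R, 0 < t < 1 /\ t *: c \in SAM.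
  case: (pbP (exists t : R, 0 < t < 1 /\ t *: c \in SAM)) => // nex; exfalso.
  by apply: nr => t ht; apply/negP => h; apply: nex; exists t.
case/andP: (ht) => t0 t1.
have c'SP : t *: c \in SP by apply: scaleSP.
have c'0 : t *: c != 0 by apply: SAM_neq0.
have hlt : (mu (t *: c) < mu c)%N.
  apply: (count_lt (x0 := t *: c)) => //.
  - move=> x _ /pbP [t' [/andP[h1 h2] ->]]; apply/pbP; exists (t' * t).
    rewrite scalerA mulr_gt0 //= -(mulr1 1) ltr_pM // ?ltW //.
  - by apply/pbP; exists t.
  - apply/negP => /pbP [t' [/andP[h1 h2] e]].
    have : (1 - t') *: (t *: c) = 0 by rewrite scalerBl scale1r -e subrr.
    move/eqP; rewrite scaler_eq0 (negbTE c'0) orbF subr_eq0 => /eqP e1.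
    by move: h2; rewrite -e1 ltxx.
have hk' : (mu (t *: c) <= k)%N by rewrite -ltnS; exact: leq_trans hlt hk.
have [s [s0 hs]] := IH (t *: c) hk' c'SP.
by exists (s * t); rewrite -scalerA mulr_gt0.
Qed.

Lemma descent c : c \in SP -> exists s : R, 0 < s /\ s *: c \in Y.
Proof. exact: descent_k (leqnn _). Qed.

Lemma Mgood_WM w : in_WM T Phi w -> Mgood w.
Proof.
case=> hg hPM _; split => // a aP.
  by rewrite -hPM map_f.
have := aP; rewrite -hPM => /mapP[b bP ->]; rewrite orthTK //; exact: gen_orth.
Qed.

Lemma WM_pos w : in_WM T Phi w -> forall a, a \in Phi -> pos a -> inspan a -> pos (w *m a).
Proof.
case=> hg hPM hmin.
have hD : forall j, j \in T -> pos (w *m D`_j).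
  move=> j jT.
  have hv : in_gen PM (reflmx D`_j).
    exists [:: D`_j]; last by rewrite /= mulmx1.
    by move=> b; rewrite inE => /eqP ->; apply/memPMP; split; [apply: D_in | apply: inspan_D].
  have := hmin _ hv; rewrite !len_N //; last by apply: gen_mul => //; apply: gen_refl; apply: D_in.
  have := NA j hg; case E: (- (w *m D`_j) \in X) => /=; first by lia.
  move=> _ _; have wP : w *m D`_j \in Phi by apply: gen_root => //; apply: D_in.
  have := root_X wP (gen_red hg (D_red j)); rewrite E orbF; by case/memXP.
move=> a aP [k ek] sa.
have hz := inspan_coef ek sa.
rewrite ek mulmx_sumr; apply: pos_sum => j _; rewrite -scalemxAr.
case: (boolP (j \in T)) => jT; first by apply: posZ; apply: hD.
by rewrite hz // scale0r; apply: pos0.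
Qed.

Lemma crit_equiv w w' : in_WM T Phi w -> in_WM T Phi w' ->
  {in X, forall x, - act w' x \in X -> - act w (act w' x) \in X} <->
  {in Y, forall x, - act w' x \in Y -> - act w (act w' x) \in Y}.
Proof.
move=> hW hW'; have hw := Mgood_WM hW; have hw' := Mgood_WM hW'.
have hg : in_gen Phi w by case: hw.
have hg' : in_gen Phi w' by case: hw'.
rewrite /act; split => hc.
- move=> c cY h1; case/memY: (cY) => cSP rc.
  case/memSP: (cSP) => b [bP pb b0 ec].
  have rb : red b.
    apply/negP => hb; have : 2^-1 *: c \in SAM.
      apply/memSAM; exists (2^-1 *: b); rewrite projZ -ec scaler_eq0 negb_or invr_eq0.
      by rewrite pnatr_eq0 /= SAM_neq0 ?SP_SAM.
    apply/negP; apply: rc; rewrite invr_gt0 ltr0n /= invf_lt1 ?ltr0n // ltr1n //.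
  have bX : b \in X by apply/memXP.
  have wbP : w' *m b \in Phi by apply: gen_root.
  have wc0 : prj (w' *m b) != 0.
    rewrite -Mgood_proj // -ec; apply: contra (SAM_neq0 (SP_SAM cSP)) => /eqP e.
    by apply/eqP; apply: (orth_inj (Mgood_orth hw')); rewrite e mulmx0.
  have h2 : - (w' *m b) \in X.
    apply/memXP; split; [exact: PhiN | rewrite redN; exact: gen_red |].
    apply/negpos_proj => //; rewrite -Mgood_proj // -ec.
    by case/memY: h1.
  have := hc b bX h2 => /memXP[_ _ h3].
  have wwbP : w *m (w' *m b) \in Phi by apply: gen_root.
  have wwc0 : prj (w *m (w' *m b)) != 0.
    rewrite -Mgood_proj //; apply: contra wc0 => /eqP e.
    by apply/eqP; apply: (orth_inj (Mgood_orth hw)); rewrite e mulmx0.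
  apply/memY; split.
    by move/negpos_proj: h3 => /(_ wwbP wwc0); rewrite -!Mgood_proj // -ec.
  by apply: redMN; apply: Mgood_redM => //; apply: Mgood_redM.
- move=> b bX h1; case/memXP: (bX) => bP rb pb.
  have nsb : ~ inspan b.
    move=> sb; have := WM_pos hW' bP pb sb => h3.
    case/memXP: h1 => _ _ h4.
    by apply: (root_not_both _ h3 h4); apply: gen_root.
  have b0 : prj b != 0 by apply/eqP => /proj_eq0.
  have cSP : prj b \in SP by apply/pos_proj.
  have [s [s0 hs]] := descent cSP.
  have wbP : w' *m b \in Phi by apply: gen_root.
  have wc0 : prj (w' *m b) != 0.
    rewrite -Mgood_proj //; apply: contra b0 => /eqP e.
    by apply/eqP; apply: (orth_inj (Mgood_orth hw')); rewrite e mulmx0.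
  have wcSP : - (w' *m prj b) \in SP.
    rewrite Mgood_proj //; apply/negpos_proj => //.
    by case/memXP: h1.
  have h2 : - (w' *m (s *: prj b)) \in Y.
    case/memY: (hs) => hs1 hs2; apply/memY; split; last first.
      by apply: redMN; apply: Mgood_redM.
    rewrite -scalemxAr -scalerN; apply: scaleSP => //.
    by rewrite scalerN scalemxAr; apply: SAMN; apply: Mgood_SAM => //; apply: SP_SAM.
  have := hc _ hs h2; case/memY => h3 _.
  have e : - (w *m (w' *m prj b)) = s^-1 *: (- (w *m (w' *m (s *: prj b)))).
    by rewrite -!scalemxAr scalerN scalerA mulVf ?gt_eqF // scale1r.
  have h4 : - (w *m (w' *m prj b)) \in SP.
    rewrite e; apply: scaleSP => //; first by rewrite invr_gt0.
    rewrite -e; apply: SAMN; apply: Mgood_SAM => //; apply: Mgood_SAM => //; exact: SP_SAM.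
  have wwbP : w *m (w' *m b) \in Phi by apply: gen_root.
  have wwc0 : prj (w *m (w' *m b)) != 0.
    rewrite -Mgood_proj //; apply: contra wc0 => /eqP e2.
    by apply/eqP; apply: (orth_inj (Mgood_orth hw)); rewrite e2 mulmx0.
  apply/memXP; split; [exact: PhiN | rewrite redN; apply: gen_red => //; exact: gen_red |].
  by apply/negpos_proj => //; rewrite -!Mgood_proj.
Qed.

Lemma main_lemma w w' : in_WM T Phi w -> in_WM T Phi w' ->
  (lM T Phi (w *m w') = lM T Phi w + lM T Phi w')%N <->
  (len D (w *m w') = len D w + len D w')%N.
Proof.
move=> hW hW'; have hw := Mgood_WM hW; have hw' := Mgood_WM hW'.
have hg : in_gen Phi w by case: hw.
have hg' : in_gen Phi w' by case: hw'.
rewrite (lM_Nw (Mgood_mul hw hw')) (lM_Nw hw) (lM_Nw hw') (len_N (gen_mul hg hg')) (len_N hg) (len_N hg').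
have e1 : Nc Y (act (w *m w')) = Nc Y (act w \o act w').
  by apply: eq_count => x; rewrite /act /= mulmxA.
have e2 : N (w *m w') = Nc X (act w \o act w').
  by apply: eq_count => x; rewrite /act /= mulmxA.
rewrite e1 e2.
apply: (iff_trans (additive_iff uY nY (sgood_M hw) (sgood_M hw'))).
apply: iff_sym; apply: (iff_trans (additive_iff uX nX (sgood_gen hg) (sgood_gen hg'))).
exact: crit_equiv.
Qed.

End Roots.

Theorem proposition1p1 (R : realFieldType) (n : nat)
    (Phi D : seq 'cV[R]_n) (T : {set 'I_(size D)}) :
  root_system Phi -> base Phi D ->
  forall w w' : 'M[R]_n,
    in_WM T Phi w -> in_WM T Phi w' ->
    (lM T Phi (w *m w') = lM T Phi w + lM T Phi w')%N <->
    (len D (w *m w') = len D w + len D w')%N.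
Proof. by move=> rs bs w w' hw hw'; apply: main_lemma. Qed.
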